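(* Let $\zeta_5=e^{2\pi i/5}$. For every $\tau\in\mathbb{H}^2$, $$\zeta_5\,\theta[\tfrac15;\tfrac15]^5+\zeta_5^3\,\theta[\tfrac35;\tfrac15]^5+\theta[1;\tfrac15]^5-\zeta_5^2\,\theta[\tfrac35;\tfrac95]^5-\zeta_5^4\,\theta[\tfrac15;\tfrac95]^5=0,$$ and $$\zeta_5^3\,\theta[\tfrac15;\tfrac35]^5+\zeta_5^4\,\theta[\tfrac35;\tfrac35]^5+\theta[1;\tfrac35]^5-\zeta_5\,\theta[\tfrac35;\tfrac75]^5-\zeta_5^2\,\theta[\tfrac15;\tfrac75]^5=0.$$
   Context: Let $\mathbb{H}^2=\{\tau\in\mathbb{C}:\Im\tau>0\}$. For a characteristic $(\epsilon,\epsilon')\in\mathbb{R}^2$, the theta function with characteristic is $$\theta[\epsilon;\epsilon'](\zeta,\tau)=\sum_{n\in\mathbb{Z}}\exp\Big(2\pi i\Big[\tfrac12\big(n+\tfrac{\epsilon}{2}\big)^2\tau+\big(n+\tfrac{\epsilon}{2}\big)\big(\zeta+\tfrac{\epsilon'}{2}\big)\Big]\Big),\quad (\zeta,\tau)\in\mathbb{C}\times\mathbb{H}^2,$$ (usually written with the column $\left[\begin{smallmatrix}\epsilon\\ \epsilon'\end{smallmatrix}\right]$), and the theta constant is $\theta[\epsilon;\epsilon']=\theta[\epsilon;\epsilon'](0,\tau)$, regarded as a function of $\tau$. *)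

(* Defs.v *)
From Stdlib Require Import Reals ZArith.
From Coquelicot Require Export Coquelicot.
Open Scope R_scope.

Definition cexp (z : C) : C :=
  (exp (Re z) * cos (Im z), exp (Re z) * sin (Im z)).

Definition theta_term (e e' : R) (z tau : C) (n : Z) : C :=
  let m : C := RtoC (IZR n + e / 2) in
  cexp (Cmult (Cmult (RtoC (2 * PI)) Ci)
         (Cplus (Cmult (Cmult (RtoC (1/2)) (Cmult m m)) tau)
                (Cmult m (Cplus z (RtoC (e' / 2)))))).

(* The sum over Z, grouped as the terms n and -(n+1) for n in nat
   (the series converges absolutely for Im tau > 0). *)
Definition theta_pair (e e' : R) (z tau : C) (n : nat) : C :=
  Cplus (theta_term e e' z tau (Z.of_nat n))
        (theta_term e e' z tau (- Z.of_nat n - 1)%Z).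

Definition theta (e e' : R) (z tau : C) : C :=
  (Series (fun n => Re (theta_pair e e' z tau n)),
   Series (fun n => Im (theta_pair e e' z tau n))).

Definition theta_const (e e' : R) (tau : C) : C := theta e e' (RtoC 0) tau.

Definition zeta5 : C := cexp (Cmult (RtoC (2 * PI / 5)) Ci).

(* Main.v *)
Require Import Defs.
From Stdlib Require Import Reals Lia Lra ZArith.
From Coquelicot Require Import Coquelicot.
From HB Require Import structures.
From mathcomp Require Import ssreflect ssrfun ssrbool eqtype ssrnat seq choice fintype finfun bigop.

Set Warnings "-notation-overridden -ambiguous-paths".
Open Scope R_scope.

Definition C0 : C := RtoC 0.
Definition C1 : C := RtoC 1.
Lemma Cplus_0_l' : left_id C0 Cplus. Proof. intro; apply Cplus_0_l. Qed.
Lemma Cmult_1_l' : left_id C1 Cmult. Proof. intro; apply Cmult_1_l. Qed.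
Lemma Cmult_0_l' : left_zero C0 Cmult. Proof. intro; apply Cmult_0_l. Qed.
Lemma Cmult_0_r' : right_zero C0 Cmult. Proof. intro; apply Cmult_0_r. Qed.
HB.instance Definition _ := Monoid.isComLaw.Build C C0 Cplus Cplus_assoc Cplus_comm Cplus_0_l'.
HB.instance Definition _ := Monoid.isComLaw.Build C C1 Cmult Cmult_assoc Cmult_comm Cmult_1_l'.
HB.instance Definition _ := Monoid.isMulLaw.Build C C0 Cmult Cmult_0_l' Cmult_0_r'.
HB.instance Definition _ := Monoid.isAddLaw.Build C Cmult Cplus Cmult_plus_distr_r Cmult_plus_distr_l.

Lemma cexp_ext a b : Re a = Re b -> Im a = Im b -> cexp a = cexp b.
Proof. destruct a, b; simpl; intros -> ->; reflexivity. Qed.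

Lemma cexp_add a b : Cmult (cexp a) (cexp b) = cexp (Cplus a b).
Proof.
  destruct a as [a1 a2], b as [b1 b2]; unfold cexp; simpl.
  rewrite exp_plus cos_plus sin_plus.
  apply injective_projections; simpl; ring.
Qed.

Lemma cos_2kpi x k : cos (x + 2 * PI * IZR k) = cos x /\ sin (x + 2 * PI * IZR k) = sin x.
Proof.
  destruct k as [|p|p].
  - rewrite Rmult_0_r Rplus_0_r; auto.
  - rewrite <- (positive_nat_Z p), <- (INR_IZR_INZ (Pos.to_nat p)).
    replace (2 * PI * INR (Pos.to_nat p)) with (2 * INR (Pos.to_nat p) * PI) by ring.
    split; [apply cos_period | apply sin_period].
  - rewrite <- Pos2Z.opp_pos, opp_IZR, <- (positive_nat_Z p), <- (INR_IZR_INZ (Pos.to_nat p)).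
    split.
    + rewrite -(cos_period (x + 2 * PI * - INR (Pos.to_nat p)) (Pos.to_nat p)); f_equal; ring.
    + rewrite -(sin_period (x + 2 * PI * - INR (Pos.to_nat p)) (Pos.to_nat p)); f_equal; ring.
Qed.

Lemma cexp_period a b k : Re a = Re b -> Im a = Im b + 2 * PI * IZR k -> cexp a = cexp b.
Proof.
  destruct a as [a1 a2], b as [b1 b2]; unfold cexp; simpl; intros -> ->.
  destruct (cos_2kpi b2 k) as [-> ->]; reflexivity.
Qed.

Lemma cexp_half a b k : Re a = Re b -> Im a = Im b + PI + 2 * PI * IZR k -> cexp a = Copp (cexp b).
Proof.
  intros H1 H2.
  rewrite (cexp_period a (Cplus b ((0, PI) : C)) k).
  - destruct b as [b1 b2]; unfold cexp; simpl.
    rewrite Rplus_0_r neg_cos neg_sin.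
    apply injective_projections; simpl; ring.
  - rewrite H1; destruct b; simpl; ring.
  - rewrite H2; destruct b; simpl; ring.
Qed.

Lemma Cmod_cexp a : Cmod (cexp a) = exp (Re a).
Proof.
  destruct a as [a1 a2]; unfold cexp, Cmod, Re, Im; cbn [fst snd].
  replace ((exp a1 * cos a2) ^ 2 + (exp a1 * sin a2) ^ 2) with (exp a1 ^ 2).
  - apply sqrt_pow2. left; apply exp_pos.
  - pose proof (sin2_cos2 a2) as H. unfold Rsqr in H. transitivity (exp a1 ^ 2 * (sin a2 * sin a2 + cos a2 * cos a2)); [rewrite H; ring | ring].
Qed.

Lemma Cpow_cexp a n : Cpow (cexp a) n = cexp (Rmult (INR n) (Re a), Rmult (INR n) (Im a)).
Proof.
  induction n as [|n IH].
  - simpl. unfold cexp; simpl. rewrite !Rmult_0_l exp_0 cos_0 sin_0.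
    apply injective_projections; simpl; ring.
  - simpl Cpow. rewrite IH cexp_add. apply cexp_ext; destruct a; unfold Re, Im; cbn [fst snd Cplus]; rewrite S_INR; ring.
Qed.

Definition Clim (u : nat -> C) (l : C) :=
  is_lim_seq (fun n => Re (u n)) (Re l) /\ is_lim_seq (fun n => Im (u n)) (Im l).

Lemma Clim_ext u v l : (forall n, u n = v n) -> Clim u l -> Clim v l.
Proof.
  intros H [H1 H2]; split; eapply is_lim_seq_ext; try eassumption; intros; simpl; rewrite H; auto.
Qed.

Lemma Clim_plus u v a b : Clim u a -> Clim v b -> Clim (fun n => Cplus (u n) (v n)) (Cplus a b).
Proof.
  intros [H1 H2] [H3 H4]; split; simpl.
  - apply (is_lim_seq_plus' _ _ _ _ H1 H3).
  - apply (is_lim_seq_plus' _ _ _ _ H2 H4).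
Qed.

Lemma Clim_opp u a : Clim u a -> Clim (fun n => Copp (u n)) (Copp a).
Proof.
  intros [H1 H2]; split; simpl.
  - exact (proj1 (is_lim_seq_opp _ _) H1).
  - exact (proj1 (is_lim_seq_opp _ _) H2).
Qed.

Lemma Clim_mult u v a b : Clim u a -> Clim v b -> Clim (fun n => Cmult (u n) (v n)) (Cmult a b).
Proof.
  intros [H1 H2] [H3 H4]; split; simpl.
  - apply is_lim_seq_minus'; apply is_lim_seq_mult'; assumption.
  - apply is_lim_seq_plus'; apply is_lim_seq_mult'; assumption.
Qed.

Lemma Clim_const a : Clim (fun _ => a) a.
Proof. split; apply is_lim_seq_const. Qed.

Lemma Clim_pow u a n : Clim u a -> Clim (fun k => Cpow (u k) n) (Cpow a n).
Proof.
  intros H; induction n as [|n IH]; simpl.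
  - apply Clim_const.
  - apply Clim_mult; auto.
Qed.

Lemma Clim_unique u a b : Clim u a -> Clim u b -> a = b.
Proof.
  intros [H1 H2] [H3 H4].
  apply is_lim_seq_unique in H1, H2, H3, H4.
  rewrite H1 in H3; rewrite H2 in H4. injection H3; injection H4; intros.
  destruct a, b; simpl in *; subst; reflexivity.
Qed.

Lemma abs_Re_le z : Rabs (Re z) <= Cmod z.
Proof. pose proof (Rmax_Cmod z). pose proof (Rmax_l (Rabs (fst z)) (Rabs (snd z))). unfold Re, Im; lra. Qed.
Lemma abs_Im_le z : Rabs (Im z) <= Cmod z.
Proof. pose proof (Rmax_Cmod z). pose proof (Rmax_r (Rabs (fst z)) (Rabs (snd z))). unfold Re, Im; lra. Qed.

Lemma Clim_zero u b : (forall n, (1 <= n)%coq_nat -> Cmod (u n) <= b n) -> is_lim_seq b 0 -> Clim u C0.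
Proof.
  intros H Hb.
  assert (Hb' : is_lim_seq (fun n => - b n) 0).
  { replace (Rbar.Finite 0) with (Rbar_opp 0) by (simpl; f_equal; ring). exact (proj1 (is_lim_seq_opp _ _) Hb). }
  split.
  - apply (is_lim_seq_le_le_loc (fun n => - b n) _ b); [|exact Hb'|exact Hb].
    exists 1%nat; intros n Hn. pose proof (H n Hn).
    pose proof (abs_Re_le (u n)). split_Rabs; lra.
  - apply (is_lim_seq_le_le_loc (fun n => - b n) _ b); [|exact Hb'|exact Hb].
    exists 1%nat; intros n Hn. pose proof (H n Hn).
    pose proof (abs_Im_le (u n)). split_Rabs; lra.
Qed.

Lemma exp_le' x y : x <= y -> exp x <= exp y.
Proof. intros [H|H]; [left; apply exp_increasing; auto | right; subst; auto]. Qed.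

Lemma exp_nat c n : exp (c * INR n) = (exp c) ^ n.
Proof.
  induction n as [|n IH].
  - simpl. rewrite Rmult_0_r exp_0; reflexivity.
  - rewrite S_INR Rmult_plus_distr_l Rmult_1_r exp_plus IH /=. ring.
Qed.

Ltac izr := repeat (rewrite ?mult_IZR ?plus_IZR ?opp_IZR ?minus_IZR).

Definition gt (tau : C) (j m : Z) : C :=
  cexp (- PI * Im tau * IZR (m * m) / 100, PI * Re tau * IZR (m * m) / 100 + PI * IZR (j * m) / 50).

Lemma term_eq tau e e' r j n : e = IZR r / 5 -> e' = IZR j / 5 ->
  theta_term e e' C0 tau n = gt tau j (10 * n + r).
Proof.
  intros -> ->. unfold theta_term, gt. destruct tau as [t1 t2].
  apply cexp_ext; unfold Re, Im, C0; cbn [fst snd Cmult Cplus RtoC Ci];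
  izr; field.
Qed.

Lemma term_eq2 tau e e' r j n : e = IZR r / 5 -> e' = 2 - IZR j / 5 ->
  theta_term e e' C0 tau n = Cmult (cexp (0, PI * e)) (gt tau j (- (10 * n + r))).
Proof.
  intros He He'. rewrite cexp_add. unfold theta_term, gt. destruct tau as [t1 t2].
  apply (cexp_period _ _ n); unfold Re, Im, C0; cbn [fst snd Cmult Cplus RtoC Ci];
  subst; izr; field.
Qed.

Lemma Cmod_tt e e' tau k :
  Cmod (theta_term e e' C0 tau k) = exp (- PI * Im tau * ((IZR k + e / 2) * (IZR k + e / 2))).
Proof.
  unfold theta_term. rewrite Cmod_cexp. f_equal. destruct tau as [t1 t2].
  unfold Re, Im, C0; cbn [fst snd Cmult Cplus RtoC Ci]. field.
Qed.

Definition PS e e' tau N : C := \big[Cplus/C0]_(i < N) theta_pair e e' C0 tau i.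
Definition Pg tau j r N : C := \big[Cplus/C0]_(i < N)
   Cplus (gt tau j (10 * Z.of_nat i + r)) (gt tau j (10 * (- Z.of_nat i - 1) + r)).

Lemma PS_eq1 tau e e' r j N : e = IZR r / 5 -> e' = IZR j / 5 -> PS e e' tau N = Pg tau j r N.
Proof.
  intros He He'. apply eq_bigr => i _. unfold theta_pair.
  rewrite (term_eq _ _ _ r j _ He He') (term_eq _ _ _ r j _ He He'). reflexivity.
Qed.

Lemma PS_eq2 tau e e' r j N : e = IZR r / 5 -> e' = 2 - IZR j / 5 ->
  PS e e' tau N = Cmult (cexp (0, PI * e)) (Pg tau j (10 - r) N).
Proof.
  intros He He'. unfold PS, Pg. rewrite big_distrr. apply eq_bigr => i _. unfold theta_pair.
  rewrite (term_eq2 _ _ _ r j _ He He') (term_eq2 _ _ _ r j _ He He').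
  rewrite -Cmult_plus_distr_l Cplus_comm.
  match goal with |- _ = ?F ?c (Cplus ?A ?B) => change (F c (Cplus A B)) with (Cmult c (Cplus A B)) end.
  f_equal. f_equal; f_equal; lia.
Qed.

Lemma tt_bound e e' tau n : 0 <= e <= 2 -> 0 < Im tau ->
  Cmod (theta_pair e e' C0 tau n) <= 2 * (exp (- PI * Im tau)) ^ n.
Proof.
  intros He Ht. unfold theta_pair.
  eapply Rle_trans; [apply Cmod_triangle|].
  rewrite !Cmod_tt -exp_nat.
  assert (Hc : 0 < PI * Im tau) by (pose proof PI_RGT_0; nra).
  assert (Hn : INR n <= INR n * INR n).
  { destruct n; [simpl; lra|]. pose proof (pos_INR n). rewrite S_INR. nra. }
  assert (H1 : exp (- PI * Im tau * ((IZR (Z.of_nat n) + e / 2) * (IZR (Z.of_nat n) + e / 2)))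
     <= exp (- PI * Im tau * INR n)).
  { apply exp_le'. rewrite -INR_IZR_INZ. pose proof (pos_INR n).
    assert (INR n <= (INR n + e / 2) * (INR n + e / 2)) by nra. nra. }
  assert (H2 : exp (- PI * Im tau * ((IZR (- Z.of_nat n - 1) + e / 2) * (IZR (- Z.of_nat n - 1) + e / 2)))
     <= exp (- PI * Im tau * INR n)).
  { apply exp_le'. izr. rewrite -INR_IZR_INZ. pose proof (pos_INR n).
    assert (INR n <= (- INR n - 1 + e / 2) * (- INR n - 1 + e / 2)) by nra. nra. }
  lra.
Qed.

Lemma ex_series_Re e e' tau : 0 <= e <= 2 -> 0 < Im tau ->
  ex_series (fun n => Re (theta_pair e e' C0 tau n)) /\ ex_series (fun n => Im (theta_pair e e' C0 tau n)).
Proof.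
  intros He Ht.
  assert (Hq : Rabs (exp (- PI * Im tau)) < 1).
  { rewrite Rabs_pos_eq; [|left; apply exp_pos]. rewrite -exp_0. apply exp_increasing.
    pose proof PI_RGT_0; nra. }
  assert (Hb : ex_series (fun n => 2 * (exp (- PI * Im tau)) ^ n)).
  { apply (ex_series_ext (fun n => scal 2 ((exp (- PI * Im tau)) ^ n))); [reflexivity|].
    apply (@ex_series_scal_l R_AbsRing R_NormedModule 2 (fun n => (exp (- PI * Im tau)) ^ n)). apply ex_series_geom, Hq. }
  split; refine (@ex_series_le R_AbsRing R_CompleteNormedModule _ _ _ Hb) => n.
  - eapply Rle_trans; [apply abs_Re_le | apply tt_bound; auto].
  - eapply Rle_trans; [apply abs_Im_le | apply tt_bound; auto].
Qed.

Lemma PS_sum e e' tau N :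
  Re (PS e e' tau N.+1) = sum_n (fun n => Re (theta_pair e e' C0 tau n)) N /\
  Im (PS e e' tau N.+1) = sum_n (fun n => Im (theta_pair e e' C0 tau n)) N.
Proof.
  induction N as [|N [IH1 IH2]].
  - rewrite /PS big_ord_recr big_ord0 !sum_O /=. unfold Re, Im, C0; cbn [fst snd Cplus RtoC]; split; ring.
  - rewrite /PS big_ord_recr !sum_Sn -IH1 -IH2 /=. split; reflexivity.
Qed.

Lemma theta_lim e e' tau : 0 <= e <= 2 -> 0 < Im tau ->
  Clim (fun N => PS e e' tau N.+1) (theta_const e e' tau).
Proof.
  intros He Ht. destruct (ex_series_Re e e' tau He Ht) as [H1 H2].
  apply Series_correct in H1, H2. split.
  - apply (is_lim_seq_ext (sum_n (fun n => Re (theta_pair e e' C0 tau n)))).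
    + intros; symmetry; apply PS_sum.
    + exact H1.
  - apply (is_lim_seq_ext (sum_n (fun n => Im (theta_pair e e' C0 tau n)))).
    + intros; symmetry; apply PS_sum.
    + exact H2.
Qed.

Definition coef (j : Z) (k : nat) : C := cexp (0, 2 * PI * IZR (j * (2 * Z.of_nat k + 1)) / 5).

Definition Pbox tau j r N : C := \big[Cplus/C0]_(i < N + N) gt tau j (10 * (Z.of_nat i - Z.of_nat N) + r).

Lemma bigC_split n (A B : 'I_n -> C) :
  \big[Cplus/C0]_(i < n) Cplus (A i) (B i) = Cplus (\big[Cplus/C0]_(i < n) A i) (\big[Cplus/C0]_(i < n) B i).
Proof. exact: big_split. Qed.
Lemma bigC_split_ord m n (F : 'I_(m + n) -> C) :
  \big[Cplus/C0]_(i < m + n) F i = Cplus (\big[Cplus/C0]_(i < m) F (lshift n i)) (\big[Cplus/C0]_(i < n) F (rshift m i)).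
Proof. exact: big_split_ord. Qed.

Lemma Pg_box tau j r N : Pg tau j r N = Pbox tau j r N.
Proof.
  rewrite /Pg /Pbox bigC_split bigC_split_ord Cplus_comm.
  f_equal.
  - rewrite (reindex_inj rev_ord_inj). apply eq_bigr => i _. f_equal.
    have Hi := ltn_ord i. move/ltP: Hi => Hi.
    cbn [nat_of_ord rev_ord lshift]. rewrite -minusE. lia.
  - apply eq_bigr => i _. f_equal.
    cbn [nat_of_ord rshift]. rewrite -plusE. lia.
Qed.

Notation X N := ('I_5 * {ffun 'I_5 -> 'I_(N + N)})%type.
Definition o (k : nat) : 'I_5 := @inord 4 k.

Lemma prod5 (F : 'I_5 -> C) : \big[Cmult/C1]_(i < 5) F i =
  Cmult (F (o 0)) (Cmult (F (o 1)) (Cmult (F (o 2)) (Cmult (F (o 3)) (F (o 4))))).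
Proof.
  rewrite !big_ord_recl big_ord0 /=.
  rewrite Cmult_1_r.
  have h0 : (ord0 : 'I_5) = o 0 by apply: val_inj; rewrite /= /o inordK.
  rewrite h0. repeat f_equal; apply: val_inj; by rewrite /= /o !inordK.
Qed.

Definition mval N (x : X N) (i : 'I_5) : Z :=
  10 * (Z.of_nat (x.2 i) - Z.of_nat N) + (2 * Z.of_nat x.1 + 1).
Definition Gx tau j N (x : X N) : C :=
  Cmult (coef j x.1) (\big[Cmult/C1]_(i < 5) gt tau j (mval N x i)).

Lemma core_big tau j N :
  \big[Cplus/C0]_(k < 5) Cmult (coef j k) (\big[Cmult/C1]_(l < 5) Pbox tau j (2 * Z.of_nat k + 1) N)
  = \big[Cplus/C0]_(x : X N) Gx tau j N x.
Proof.
  transitivity (\big[Cplus/C0]_(k < 5) \big[Cplus/C0]_(f : {ffun 'I_5 -> 'I_(N+N)}) Gx tau j N (k, f)).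
  - apply eq_bigr => k _. rewrite /Pbox bigA_distr_bigA big_distrr. apply eq_bigr => f _. reflexivity.
  - exact: pair_bigA.
Qed.

Definition ssum N (x : X N) : Z :=
  mval N x (o 0) + mval N x (o 1) + mval N x (o 2) + mval N x (o 3) + mval N x (o 4).
Definition nrm N (x : X N) : Z :=
  mval N x (o 0) * mval N x (o 0) + mval N x (o 1) * mval N x (o 1) + mval N x (o 2) * mval N x (o 2)
  + mval N x (o 3) * mval N x (o 3) + mval N x (o 4) * mval N x (o 4).
Definition ball N (x : X N) : bool := Z.ltb (nrm N x) (100 * Z.of_nat N * Z.of_nat N).
Definition tt5 N (x : X N) : Z := ssum N x / 5.
Definition rr N (x : X N) : nat := Z.to_nat (((mval N x (o 0) - 2 * tt5 N x) mod 10 - 1) / 2).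
Definition iota_x N (x : X N) : X N :=
  (insubd x.1 (rr N x),
   [ffun i => insubd (x.2 i) (Z.to_nat ((mval N x i - 2 * tt5 N x - (2 * Z.of_nat (rr N x) + 1)) / 10
                                        + Z.of_nat N))]).

Lemma forall5 (P : 'I_5 -> Prop) : P (o 0) -> P (o 1) -> P (o 2) -> P (o 3) -> P (o 4) -> forall i, P i.
Proof.
  move=> h0 h1 h2 h3 h4 i.
  have E : forall k (H : (k < 5)%N), Ordinal H = o k by move=> k H; apply: val_inj; rewrite /= /o inordK.
  case: i => [[|[|[|[|[|k]]]]] Hk]; rewrite E //.
Qed.

Lemma ord_facts N (x : X N) i :
  (0 <= Z.of_nat x.1 <= 4 /\ 0 <= Z.of_nat (x.2 i) < 2 * Z.of_nat N)%Z.
Proof.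
  have H1 := ltn_ord x.1. have H2 := ltn_ord (x.2 i).
  move: (nat_of_ord x.1) (nat_of_ord (x.2 i)) H1 H2 => a b H1 H2.
  move/ltP: H1 => H1. rewrite -plusE in H2. move/ltP: H2 => H2. lia.
Qed.

Lemma tt5_eq N (x : X N) : (ssum N x = 5 * tt5 N x /\
   tt5 N x = 2 * (Z.of_nat (x.2 (o 0)) + Z.of_nat (x.2 (o 1)) + Z.of_nat (x.2 (o 2)) + Z.of_nat (x.2 (o 3))
     + Z.of_nat (x.2 (o 4)) - 5 * Z.of_nat N) + 2 * Z.of_nat x.1 + 1)%Z.
Proof. rewrite /tt5 /ssum /mval. Z.div_mod_to_equations. lia. Qed.

Lemma sq_bound (a b : Z) : (a * a < b * b -> 0 <= b -> - b < a < b)%Z.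
Proof. nia. Qed.

Lemma sq_id (m0 m1 m2 m3 m4 t : Z) : (m0 + m1 + m2 + m3 + m4 = 5 * t ->
  (m0 - 2 * t) * (m0 - 2 * t) + (m1 - 2 * t) * (m1 - 2 * t) + (m2 - 2 * t) * (m2 - 2 * t)
  + (m3 - 2 * t) * (m3 - 2 * t) + (m4 - 2 * t) * (m4 - 2 * t)
  = m0 * m0 + m1 * m1 + m2 * m2 + m3 * m3 + m4 * m4)%Z.
Proof. intro H. replace m4 with (5 * t - m0 - m1 - m2 - m3)%Z by lia. ring. Qed.

Lemma coord_bound N (x : X N) : ball N x -> forall i,
  (- (10 * Z.of_nat N) < mval N x i - 2 * tt5 N x < 10 * Z.of_nat N)%Z.
Proof.
  rewrite /ball => /Z.ltb_lt Hb.
  have [Hs _] := tt5_eq N x.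
  have Hid := sq_id _ _ _ _ _ _ Hs.
  rewrite -/(nrm N x) in Hid.
  have Hsq : forall z : Z, (0 <= z * z)%Z by move=> z; nia.
  apply: forall5; apply: sq_bound; try lia;
  [ have := Hsq (mval N x (o 1) - 2 * tt5 N x)%Z; have := Hsq (mval N x (o 2) - 2 * tt5 N x)%Z;
    have := Hsq (mval N x (o 3) - 2 * tt5 N x)%Z; have := Hsq (mval N x (o 4) - 2 * tt5 N x)%Z
  | have := Hsq (mval N x (o 0) - 2 * tt5 N x)%Z; have := Hsq (mval N x (o 2) - 2 * tt5 N x)%Z;
    have := Hsq (mval N x (o 3) - 2 * tt5 N x)%Z; have := Hsq (mval N x (o 4) - 2 * tt5 N x)%Z
  | have := Hsq (mval N x (o 0) - 2 * tt5 N x)%Z; have := Hsq (mval N x (o 1) - 2 * tt5 N x)%Z;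
    have := Hsq (mval N x (o 3) - 2 * tt5 N x)%Z; have := Hsq (mval N x (o 4) - 2 * tt5 N x)%Z
  | have := Hsq (mval N x (o 0) - 2 * tt5 N x)%Z; have := Hsq (mval N x (o 1) - 2 * tt5 N x)%Z;
    have := Hsq (mval N x (o 2) - 2 * tt5 N x)%Z; have := Hsq (mval N x (o 4) - 2 * tt5 N x)%Z
  | have := Hsq (mval N x (o 0) - 2 * tt5 N x)%Z; have := Hsq (mval N x (o 1) - 2 * tt5 N x)%Z;
    have := Hsq (mval N x (o 2) - 2 * tt5 N x)%Z; have := Hsq (mval N x (o 3) - 2 * tt5 N x)%Z ];
  lia.
Qed.

Lemma rr_facts N (x : X N) : (Z.of_nat (rr N x) <= 4 /\
  2 * Z.of_nat (rr N x) + 1 = (mval N x (o 0) - 2 * tt5 N x) mod 10)%Z.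
Proof.
  have [H1 H2] := tt5_eq N x. have [Hr _] := ord_facts N x (o 0).
  move: H2. rewrite /rr /mval => H2. Z.div_mod_to_equations. lia.
Qed.

Lemma lt_addn a N : (Z.of_nat a < 2 * Z.of_nat N)%Z -> (a < N + N)%N.
Proof. move=> H; apply/ltP; rewrite -plusE; lia. Qed.

Lemma iota_val N (x : X N) : ball N x -> forall i,
  mval N (iota_x N x) i = (mval N x i - 2 * tt5 N x)%Z /\ (iota_x N x).1 = rr N x :> nat.
Proof.
  move=> Hb i.
  have Hc := coord_bound N x Hb i.
  have Hc0 := coord_bound N x Hb (o 0).
  have [Hrr1 Hrr2] := rr_facts N x.
  have [Hx1 Hx2] := ord_facts N x i.
  have [_ Hx3] := ord_facts N x (o 0).
  have E1 : (iota_x N x).1 = rr N x :> nat.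
  { rewrite /iota_x /= val_insubd. case: ifP => // /negP H. exfalso; apply: H. apply/ltP. lia. }
  split => //.
  rewrite /mval E1; cbn [iota_x snd]; rewrite ffunE val_insubd.
  move: Hc Hc0 Hrr2 Hx2 Hx3. rewrite /mval.
  set t := tt5 N x. set r' := rr N x.
  move=> Hc Hc0 Hrr2 Hx2 Hx3.
  case: ifP => [_|/negP H].
  - Z.div_mod_to_equations. lia.
  - exfalso; apply: H. apply: lt_addn. Z.div_mod_to_equations. lia.
Qed.

Lemma mval_inj N (x y : X N) : (forall i, mval N y i = mval N x i) -> y = x.
Proof.
  move=> H. have H0 := H (o 0).
  have [Hy1 _] := ord_facts N y (o 0). have [Hx1 _] := ord_facts N x (o 0).
  have [Hy2 Hy3] := ord_facts N y (o 0). have [Hx2 Hx3] := ord_facts N x (o 0).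
  move: H0; rewrite /mval => H0.
  have Er : y.1 = x.1.
  { apply: ord_inj. apply: Nat2Z.inj. lia. }
  case: x y H Er {H0 Hy1 Hx1 Hy2 Hx2 Hy3 Hx3} => [r f] [r' f'] H Er. cbn [fst] in Er. subst r'.
  f_equal. apply/ffunP => i. apply: ord_inj.
  move: (H i). rewrite /mval; cbn [fst snd]. move: (f' i) (f i) => a b Hab.
  apply: Nat2Z.inj. lia.
Qed.

Lemma iota_sum N (x : X N) : ball N x ->
  ssum N (iota_x N x) = (ssum N x - 10 * tt5 N x)%Z /\ nrm N (iota_x N x) = nrm N x.
Proof.
  move=> Hb. have H := iota_val N x Hb.
  rewrite /ssum /nrm !(proj1 (H _)). split; first lia.
  apply: sq_id. exact: (proj1 (tt5_eq N x)).
Qed.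

Lemma ball_iota N (x : X N) : ball N x -> ball N (iota_x N x).
Proof. move=> Hb. rewrite /ball (proj2 (iota_sum N x Hb)). exact Hb. Qed.

Lemma tt5_iota N (x : X N) : ball N x -> tt5 N (iota_x N x) = (- tt5 N x)%Z.
Proof.
  move=> Hb. rewrite {1}/tt5 (proj1 (iota_sum N x Hb)) (proj1 (tt5_eq N x)).
  Z.div_mod_to_equations. lia.
Qed.

Lemma iota_iota N (x : X N) : ball N x -> iota_x N (iota_x N x) = x.
Proof.
  move=> Hb. apply: mval_inj => i.
  rewrite (proj1 (iota_val N _ (ball_iota N x Hb) i)) (proj1 (iota_val N x Hb i)) (tt5_iota N x Hb).
  lia.
Qed.

Definition Garg tau (j r m0 m1 m2 m3 m4 : Z) : C :=
  (- PI * Im tau * IZR (m0 * m0 + m1 * m1 + m2 * m2 + m3 * m3 + m4 * m4) / 100,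
   PI * Re tau * IZR (m0 * m0 + m1 * m1 + m2 * m2 + m3 * m3 + m4 * m4) / 100
   + PI * IZR (j * (m0 + m1 + m2 + m3 + m4 + 20 * (2 * r + 1))) / 50).

Lemma Gx_eq tau j N (x : X N) : Gx tau j N x =
  cexp (Garg tau j (Z.of_nat x.1) (mval N x (o 0)) (mval N x (o 1)) (mval N x (o 2)) (mval N x (o 3)) (mval N x (o 4))).
Proof.
  rewrite /Gx prod5 /coef /gt !cexp_add. apply cexp_ext; destruct tau as [t1 t2];
  unfold Garg, Re, Im; cbn [fst snd Cplus]; izr; field.
Qed.

Lemma G_iota tau j N (x : X N) : (exists p, j = 2 * p + 1)%Z -> ball N x ->
  Gx tau j N (iota_x N x) = Copp (Gx tau j N x).
Proof.
  move=> [p Hj] Hb.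
  have H := iota_val N x Hb.
  rewrite !Gx_eq !(proj1 (H _)) (proj2 (H (o 0))).
  have [Hs Ht] := tt5_eq N x.
  have [_ Hrr] := rr_facts N x.
  have Hsq := sq_id _ _ _ _ _ _ Hs.
  set t := tt5 N x in Hs Ht Hrr Hsq *.
  set m0 := mval N x (o 0) in Hs Hrr Hsq *.
  set m1 := mval N x (o 1) in Hs Hsq *.
  set m2 := mval N x (o 2) in Hs Hsq *.
  set m3 := mval N x (o 3) in Hs Hsq *.
  set m4 := mval N x (o 4) in Hs Hsq *.
  set u := (Z.of_nat (x.2 (o 0)) + Z.of_nat (x.2 (o 1)) + Z.of_nat (x.2 (o 2)) + Z.of_nat (x.2 (o 3))
     + Z.of_nat (x.2 (o 4)) - 5 * Z.of_nat N + Z.of_nat x.1)%Z in Ht.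
  have Hm0 : (m0 = 10 * (Z.of_nat (x.2 (o 0)) - Z.of_nat N) + (2 * Z.of_nat x.1 + 1))%Z by [].
  set q1 := ((m0 - 2 * t) / 10)%Z.
  have Hq : (2 * Z.of_nat (rr N x) + 1 = m0 - 2 * t - 10 * q1)%Z.
  { rewrite Hrr /q1. Z.div_mod_to_equations. lia. }
  set c := (Z.of_nat (x.2 (o 0)) - Z.of_nat N - q1)%Z.
  set k := (- (2 * p * u + p + u) - 1 + 2 * (2 * p + 1) * c)%Z.
  have HJ : (j * ((m0 - 2 * t) + (m1 - 2 * t) + (m2 - 2 * t) + (m3 - 2 * t) + (m4 - 2 * t)
              + 20 * (2 * Z.of_nat (rr N x) + 1))
           = j * (m0 + m1 + m2 + m3 + m4 + 20 * (2 * Z.of_nat x.1 + 1)) + 50 + 100 * k)%Z.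
  { rewrite Hq /k /c Hj. have -> : t = (2 * u + 1)%Z by rewrite Ht /u; ring.
    rewrite Hm0. ring. }
  apply (cexp_half _ _ k).
  - unfold Garg, Re; cbn [fst]. rewrite Hsq. reflexivity.
  - unfold Garg, Im; cbn [snd]. rewrite Hsq HJ. izr. field.
Qed.

Definition iota' N (x : X N) : X N := if ball N x then iota_x N x else x.

Lemma iota'K N : cancel (iota' N) (iota' N).
Proof.
  move=> x. rewrite /iota'. case Hb: (ball N x).
  - rewrite (ball_iota N x Hb). exact: iota_iota.
  - by rewrite Hb.
Qed.

Lemma Copp_big (T : finType) (F : T -> C) :
  Copp (\big[Cplus/C0]_(x : T) F x) = \big[Cplus/C0]_(x : T) Copp (F x).
Proof.
  apply: (big_morph Copp).
  - move=> a b. apply Copp_plus_distr.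
  - rewrite /C0. apply injective_projections; simpl; ring.
Qed.

Lemma ball_sum_zero tau j N : (exists p, j = 2 * p + 1)%Z ->
  \big[Cplus/C0]_(x : X N) (if ball N x then Gx tau j N x else C0) = C0.
Proof.
  move=> Hj.
  set S := \big[Cplus/C0]_(x : X N) _.
  have HS : S = Copp S.
  { rewrite {1}/S (reindex_inj (can_inj (iota'K N))) Copp_big. apply: eq_bigr => x _.
    rewrite /iota'. case Hb: (ball N x).
    - rewrite (ball_iota N x Hb). exact: G_iota.
    - rewrite Hb /C0. apply injective_projections; simpl; ring. }
  move: HS. case: S => a b [Ha Hb]. rewrite /C0. apply injective_projections; simpl; lra.
Qed.

Lemma Cmod_big_seq (T : Type) (s : seq T) (F : T -> C) B : (forall x, Cmod (F x) <= B) ->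
  Cmod (\big[Cplus/C0]_(x <- s) F x) <= INR (size s) * B.
Proof.
  move=> H. elim: s => [|y s IH].
  - rewrite big_nil /C0 Cmod_0 /=. lra.
  - rewrite big_cons. eapply Rle_trans; [apply Cmod_triangle|].
    change (size (y :: s)) with (size s).+1. rewrite S_INR. have := H y. lra.
Qed.

Lemma Cmod_big_fin (T : finType) (F : T -> C) B : (forall x, Cmod (F x) <= B) ->
  Cmod (\big[Cplus/C0]_(x : T) F x) <= INR #|T| * B.
Proof.
  move=> H. rewrite cardT -big_enum. exact: Cmod_big_seq.
Qed.

Lemma sum5 (F : nat -> C) : \big[Cplus/C0]_(k < 5) F k =
  Cplus (F 0%N) (Cplus (F 1%N) (Cplus (F 2%N) (Cplus (F 3%N) (F 4%N)))).
Proof.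
  transitivity (Cplus (F 0%N) (Cplus (F 1%N) (Cplus (F 2%N) (Cplus (F 3%N) (Cplus (F 4%N) C0))))).
  - rewrite !big_ord_recl big_ord0. reflexivity.
  - rewrite /C0. do 4 f_equal. destruct (F 4%N); apply injective_projections; simpl; ring.
Qed.

Definition core_expr tau j M : C :=
  \big[Cplus/C0]_(k < 5) Cmult (coef j k) (Cpow (Pg tau j (2 * Z.of_nat k + 1) M) 5).

Lemma core_expr_big tau j M : core_expr tau j M = \big[Cplus/C0]_(x : X M) Gx tau j M x.
Proof.
  rewrite -core_big /core_expr. apply: eq_bigr => k _. f_equal.
  rewrite prod5 Pg_box /=. rewrite Cmult_1_r. reflexivity.
Qed.

Lemma Gx_bound tau j N (x : X N) : 0 < Im tau -> ball N x = false ->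
  Cmod (Gx tau j N x) <= exp (- PI * Im tau * (INR N * INR N)).
Proof.
  move=> Ht Hb. rewrite Gx_eq Cmod_cexp. apply: exp_le'.
  move: Hb; rewrite /ball => /Z.ltb_ge Hb.
  have : 100 * INR N * INR N <= IZR (nrm N x).
  { rewrite !INR_IZR_INZ -!mult_IZR. apply IZR_le. exact Hb. }
  rewrite /nrm /Garg /Re /=. move=> H.
  have Hc : 0 < PI * Im tau by pose proof PI_RGT_0; nra.
  nra.
Qed.

Lemma bigC_splitT (T : finType) (A B : T -> C) :
  \big[Cplus/C0]_(i : T) Cplus (A i) (B i) = Cplus (\big[Cplus/C0]_(i : T) A i) (\big[Cplus/C0]_(i : T) B i).
Proof. exact: big_split. Qed.

Lemma core_bound tau j N : (exists p, j = 2 * p + 1)%Z -> 0 < Im tau ->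
  Cmod (core_expr tau j N) <= INR #|{: X N}| * exp (- PI * Im tau * (INR N * INR N)).
Proof.
  move=> Hj Ht. rewrite core_expr_big.
  have -> : \big[Cplus/C0]_(x : X N) Gx tau j N x =
    Cplus (\big[Cplus/C0]_(x : X N) (if ball N x then Gx tau j N x else C0))
          (\big[Cplus/C0]_(x : X N) (if ball N x then C0 else Gx tau j N x)).
  { rewrite -bigC_splitT. apply: eq_bigr => x _. case: (ball N x); rewrite /C0;
    destruct (Gx tau j N x); apply injective_projections; simpl; ring. }
  rewrite ball_sum_zero // /C0 Cplus_0_l. apply: Cmod_big_fin => x.
  case Hb: (ball N x).
  - rewrite /C0 Cmod_0. left; apply exp_pos.
  - exact: Gx_bound.
Qed.

Lemma card_X N : INR #|{: X N}| = 5 * (2 * INR N) ^ 5.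
Proof.
  rewrite card_prod card_ffun !card_ord !expnS expn0 !muln1 -!multE -!plusE !mult_INR !plus_INR.
  replace (INR 5) with 5 by (simpl; ring). simpl. ring.
Qed.

Lemma inv_n_lim : is_lim_seq (fun n => / INR n) 0.
Proof.
  have H := is_lim_seq_inv INR p_infty is_lim_seq_INR ltac:(discriminate).
  exact H.
Qed.

Lemma exp_big y : 0 <= y -> (y / 6) ^ 6 <= exp y.
Proof.
  move=> Hy. replace y with (y / 6 * INR 6) at 2 by (simpl; field).
  rewrite exp_nat. apply pow_incr. split; [lra|].
  have := exp_ineq1_le (y / 6). lra.
Qed.

Lemma bound_lim c : 0 < c ->
  is_lim_seq (fun n => 5 * (2 * INR n) ^ 5 * exp (- c * (INR n * INR n))) 0.
Proof.
  move=> Hc.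
  set K := 160 * 6 ^ 6 / c ^ 6.
  have HK : 0 <= K by rewrite /K; apply Rmult_le_pos; [nra | left; apply Rinv_0_lt_compat, pow_lt, Hc].
  apply (is_lim_seq_le_le_loc (fun _ => 0) _ (fun n => K * / INR n)).
  - exists 1%nat => n Hn.
    have Hy : 1 <= INR n by apply (le_INR 1); exact Hn.
    set y := INR n in Hy *.
    have HE := exp_big (c * (y * y)) ltac:(apply Rmult_le_pos; nra).
    have Hp : 0 < (c * (y * y) / 6) ^ 6.
    { apply pow_lt. apply Rmult_lt_0_compat; [apply Rmult_lt_0_compat; nra | lra]. }
    have He : exp (- c * (y * y)) = / exp (c * (y * y)) by rewrite -exp_Ropp; f_equal; ring.
    rewrite He. split.
    + apply Rmult_le_pos; [apply Rmult_le_pos; [lra | apply pow_le; lra] | left; apply Rinv_0_lt_compat, exp_pos].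
    + eapply Rle_trans.
      * apply Rmult_le_compat_l; [apply Rmult_le_pos; [lra | apply pow_le; lra]|].
        apply Rinv_le_contravar; [exact Hp | exact HE].
      * have -> : 5 * (2 * y) ^ 5 * / (c * (y * y) / 6) ^ 6 = K * / y ^ 7.
        { rewrite /K. field. split; lra. }
        apply Rmult_le_compat_l; [exact HK|].
        apply Rinv_le_contravar; [lra|].
        have : 1 <= y ^ 6 by apply pow_R1_Rle; lra.
        simpl. nra.
  - apply is_lim_seq_const.
  - have H := is_lim_seq_mult' (fun _ => K) (fun n => / INR n) K 0 (is_lim_seq_const K) inv_n_lim.
    rewrite Rmult_0_r in H. exact H.
Qed.

Lemma core_lim tau j : (exists p, j = 2 * p + 1)%Z -> 0 < Im tau ->
  Clim (fun N => core_expr tau j N.+1) C0.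
Proof.
  move=> Hj Ht.
  have Hc : 0 < PI * Im tau by pose proof PI_RGT_0; nra.
  apply (Clim_zero _ (fun n => 5 * (2 * INR n.+1) ^ 5 * exp (- (PI * Im tau) * (INR n.+1 * INR n.+1)))).
  - move=> n _. eapply Rle_trans; [apply core_bound; auto|]. rewrite card_X.
    right. f_equal. f_equal. ring.
  - apply (is_lim_seq_incr_1 (fun n => 5 * (2 * INR n) ^ 5 * exp (- (PI * Im tau) * (INR n * INR n)))).
    exact: bound_lim.
Qed.

Lemma zeta_eq : zeta5 = cexp (0, 2 * PI / 5).
Proof. unfold zeta5. apply cexp_ext; unfold Re, Im; cbn [fst snd Cmult RtoC Ci]; ring. Qed.

Lemma coef_per a j k m : a = 2 * PI * IZR (j * (2 * Z.of_nat k + 1)) / 5 + 2 * PI * IZR m ->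
  cexp (0, a) = coef j k.
Proof. move=> H. apply (cexp_period _ _ m); unfold Re, Im; cbn [fst snd]; lra. Qed.

Lemma coef_neg a j k m : a = 2 * PI * IZR (j * (2 * Z.of_nat k + 1)) / 5 + PI + 2 * PI * IZR m ->
  cexp (0, a) = Copp (coef j k).
Proof. move=> H. apply (cexp_half _ _ m); unfold Re, Im; cbn [fst snd]; lra. Qed.

Lemma cexp_mult0 a b : Cmult (cexp (0, a)) (cexp (0, b)) = cexp (0, a + b).
Proof. rewrite cexp_add. apply cexp_ext; unfold Re, Im; cbn [fst snd Cplus]; ring. Qed.

Lemma cpow0 a n : Cpow (cexp (0, a)) n = cexp (0, INR n * a).
Proof. rewrite Cpow_cexp. apply cexp_ext; unfold Re, Im; cbn [fst snd]; ring. Qed.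

Lemma cexp00 : cexp (0, 0) = RtoC 1.
Proof. unfold cexp, RtoC; cbn [fst snd]. rewrite exp_0 cos_0 sin_0. f_equal; ring. Qed.

Ltac num := repeat (rewrite ?mult_IZR ?plus_IZR ?opp_IZR ?minus_IZR);
  rewrite -?INR_IZR_INZ ?S_INR ?INR_0; lra.

Lemma h_test : Cmult (Cpow zeta5 2) (Cpow (cexp (0, PI * (3/5))) 5) = Copp (coef 1 3).
Proof. rewrite zeta_eq !cpow0 cexp_mult0. apply (coef_neg _ _ _ 0). num. Qed.

Definition EE (c0 c1 c3 c4 a b c d e : C) : C :=
  Cplus (Cplus (Cplus (Cplus (Cmult c0 (Cpow a 5)) (Cmult c1 (Cpow b 5))) (Cpow c 5))
    (Copp (Cmult c3 (Cpow d 5)))) (Copp (Cmult c4 (Cpow e 5))).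

Lemma EE_lim c0 c1 c3 c4 a b c d e A B Cc D E :
  Clim a A -> Clim b B -> Clim c Cc -> Clim d D -> Clim e E ->
  Clim (fun n => EE c0 c1 c3 c4 (a n) (b n) (c n) (d n) (e n)) (EE c0 c1 c3 c4 A B Cc D E).
Proof.
  move=> Ha Hb Hc Hd He. unfold EE.
  apply: Clim_plus; [apply: Clim_plus; [apply: Clim_plus; [apply: Clim_plus|]|]|].
  - apply: Clim_mult; [apply: Clim_const | apply: Clim_pow; exact Ha].
  - apply: Clim_mult; [apply: Clim_const | apply: Clim_pow; exact Hb].
  - apply: Clim_pow; exact Hc.
  - apply: Clim_opp; apply: Clim_mult; [apply: Clim_const | apply: Clim_pow; exact Hd].
  - apply: Clim_opp; apply: Clim_mult; [apply: Clim_const | apply: Clim_pow; exact He].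
Qed.

Lemma E1_reduce tau M :
  EE zeta5 (Cpow zeta5 3) (Cpow zeta5 2) (Cpow zeta5 4)
     (PS (1/5) (1/5) tau M) (PS (3/5) (1/5) tau M) (PS 1 (1/5) tau M)
     (PS (3/5) (9/5) tau M) (PS (1/5) (9/5) tau M) = core_expr tau 1 M.
Proof.
  rewrite (PS_eq1 tau (1/5) (1/5) 1 1 M ltac:(lra) ltac:(lra)).
  rewrite (PS_eq1 tau (3/5) (1/5) 3 1 M ltac:(lra) ltac:(lra)).
  rewrite (PS_eq1 tau 1 (1/5) 5 1 M ltac:(lra) ltac:(lra)).
  rewrite (PS_eq2 tau (3/5) (9/5) 3 1 M ltac:(lra) ltac:(lra)).
  rewrite (PS_eq2 tau (1/5) (9/5) 1 1 M ltac:(lra) ltac:(lra)).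
  rewrite /core_expr (sum5 (fun k => Cmult (coef 1 k) (Cpow (Pg tau 1 (2 * Z.of_nat k + 1) M) 5))).
  change (2 * Z.of_nat 0 + 1)%Z with 1%Z. change (2 * Z.of_nat 1 + 1)%Z with 3%Z.
  change (2 * Z.of_nat 2 + 1)%Z with 5%Z. change (2 * Z.of_nat 3 + 1)%Z with 7%Z.
  change (2 * Z.of_nat 4 + 1)%Z with 9%Z. change (10 - 3)%Z with 7%Z. change (10 - 1)%Z with 9%Z.
  have h0 : zeta5 = coef 1 0 by rewrite zeta_eq; apply (coef_per _ _ _ 0); num.
  have h1 : Cpow zeta5 3 = coef 1 1 by rewrite zeta_eq cpow0; apply (coef_per _ _ _ 0); num.
  have h2 : coef 1 2 = RtoC 1 by rewrite -cexp00; symmetry; apply (coef_per _ _ _ (-1)); num.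
  have h3 : Cmult (Cpow zeta5 2) (Cpow (cexp (0, PI * (3/5))) 5) = Copp (coef 1 3)
    by rewrite zeta_eq !cpow0 cexp_mult0; apply (coef_neg _ _ _ 0); num.
  have h4 : Cmult (Cpow zeta5 4) (Cpow (cexp (0, PI * (1/5))) 5) = Copp (coef 1 4)
    by rewrite zeta_eq !cpow0 cexp_mult0; apply (coef_neg _ _ _ (-1)); num.
  rewrite /EE !Cpow_mult_l (Cmult_assoc (Cpow zeta5 2)) (Cmult_assoc (Cpow zeta5 4)) h3 h4 h1 h0 h2.
  ring.
Qed.

Lemma E2_reduce tau M :
  EE (Cpow zeta5 3) (Cpow zeta5 4) zeta5 (Cpow zeta5 2)
     (PS (1/5) (3/5) tau M) (PS (3/5) (3/5) tau M) (PS 1 (3/5) tau M)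
     (PS (3/5) (7/5) tau M) (PS (1/5) (7/5) tau M) = core_expr tau 3 M.
Proof.
  rewrite (PS_eq1 tau (1/5) (3/5) 1 3 M ltac:(lra) ltac:(lra)).
  rewrite (PS_eq1 tau (3/5) (3/5) 3 3 M ltac:(lra) ltac:(lra)).
  rewrite (PS_eq1 tau 1 (3/5) 5 3 M ltac:(lra) ltac:(lra)).
  rewrite (PS_eq2 tau (3/5) (7/5) 3 3 M ltac:(lra) ltac:(lra)).
  rewrite (PS_eq2 tau (1/5) (7/5) 1 3 M ltac:(lra) ltac:(lra)).
  rewrite /core_expr (sum5 (fun k => Cmult (coef 3 k) (Cpow (Pg tau 3 (2 * Z.of_nat k + 1) M) 5))).
  change (2 * Z.of_nat 0 + 1)%Z with 1%Z. change (2 * Z.of_nat 1 + 1)%Z with 3%Z.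
  change (2 * Z.of_nat 2 + 1)%Z with 5%Z. change (2 * Z.of_nat 3 + 1)%Z with 7%Z.
  change (2 * Z.of_nat 4 + 1)%Z with 9%Z. change (10 - 3)%Z with 7%Z. change (10 - 1)%Z with 9%Z.
  have h0 : Cpow zeta5 3 = coef 3 0 by rewrite zeta_eq cpow0; apply (coef_per _ _ _ 0); num.
  have h1 : Cpow zeta5 4 = coef 3 1 by rewrite zeta_eq cpow0; apply (coef_per _ _ _ (-1)); num.
  have h2 : coef 3 2 = RtoC 1 by rewrite -cexp00; symmetry; apply (coef_per _ _ _ (-3)); num.
  have h3 : Cmult zeta5 (Cpow (cexp (0, PI * (3/5))) 5) = Copp (coef 3 3)
    by rewrite zeta_eq !cpow0 cexp_mult0; apply (coef_neg _ _ _ (-3)); num.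
  have h4 : Cmult (Cpow zeta5 2) (Cpow (cexp (0, PI * (1/5))) 5) = Copp (coef 3 4)
    by rewrite zeta_eq !cpow0 cexp_mult0; apply (coef_neg _ _ _ (-5)); num.
  rewrite /EE !Cpow_mult_l (Cmult_assoc zeta5) (Cmult_assoc (Cpow zeta5 2)) h3 h4 h0 h1 h2.
  ring.
Qed.

Theorem theorem3p2 : forall tau : C, 0 < Im tau ->
  Cplus (Cplus (Cplus (Cplus
    (Cmult zeta5 (Cpow (theta_const (1/5) (1/5) tau) 5))
    (Cmult (Cpow zeta5 3) (Cpow (theta_const (3/5) (1/5) tau) 5)))
    (Cpow (theta_const 1 (1/5) tau) 5))
    (Copp (Cmult (Cpow zeta5 2) (Cpow (theta_const (3/5) (9/5) tau) 5))))
    (Copp (Cmult (Cpow zeta5 4) (Cpow (theta_const (1/5) (9/5) tau) 5)))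
  = RtoC 0
  /\
  Cplus (Cplus (Cplus (Cplus
    (Cmult (Cpow zeta5 3) (Cpow (theta_const (1/5) (3/5) tau) 5))
    (Cmult (Cpow zeta5 4) (Cpow (theta_const (3/5) (3/5) tau) 5)))
    (Cpow (theta_const 1 (3/5) tau) 5))
    (Copp (Cmult zeta5 (Cpow (theta_const (3/5) (7/5) tau) 5))))
    (Copp (Cmult (Cpow zeta5 2) (Cpow (theta_const (1/5) (7/5) tau) 5)))
  = RtoC 0.
Proof.
  move=> tau Ht. split.
  - apply (Clim_unique (fun N => EE zeta5 (Cpow zeta5 3) (Cpow zeta5 2) (Cpow zeta5 4)
     (PS (1/5) (1/5) tau N.+1) (PS (3/5) (1/5) tau N.+1) (PS 1 (1/5) tau N.+1)
     (PS (3/5) (9/5) tau N.+1) (PS (1/5) (9/5) tau N.+1))).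
    + apply EE_lim; apply theta_lim; auto; lra.
    + apply (Clim_ext (fun N => core_expr tau 1 N.+1)).
      * move=> n. by rewrite E1_reduce.
      * apply core_lim; auto. exists 0%Z; reflexivity.
  - apply (Clim_unique (fun N => EE (Cpow zeta5 3) (Cpow zeta5 4) zeta5 (Cpow zeta5 2)
     (PS (1/5) (3/5) tau N.+1) (PS (3/5) (3/5) tau N.+1) (PS 1 (3/5) tau N.+1)
     (PS (3/5) (7/5) tau N.+1) (PS (1/5) (7/5) tau N.+1))).
    + apply EE_lim; apply theta_lim; auto; lra.
    + apply (Clim_ext (fun N => core_expr tau 3 N.+1)).
      * move=> n. by rewrite E2_reduce.
      * apply core_lim; auto. exists 1%Z; reflexivity.
Qed.
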